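(* Let $A_1,\ldots,A_k$ and $B_1,\ldots,B_k$ be $n\times n$ Hermitian matrices with $mI\le A_i,B_i\le MI$ for $i=1,\ldots,k$ and some scalars $0<m<M$, and let $\Phi_1,\ldots,\Phi_k:\mathscr{M}_n\to\mathscr{M}_r$ be positive linear maps with $\sum_{i=1}^k\Phi_i(I)=I$. Then $$\left(\sum_{i=1}^k\Phi_i(A_i^2)\right)^{1/2}+\left(\sum_{i=1}^k\Phi_i(B_i^2)\right)^{1/2}\le\frac{M+m}{2\sqrt{Mm}}\left(\sum_{i=1}^k\Phi_i((A_i+B_i)^2)\right)^{1/2}$$ and $$\left(\sum_{i=1}^k\Phi_i(A_i^2)\right)^{1/2}+\left(\sum_{i=1}^k\Phi_i(B_i^2)\right)^{1/2}\le\frac{(M-m)^2}{2(M+m)}I+\left(\sum_{i=1}^k\Phi_i((A_i+B_i)^2)\right)^{1/2}.$$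
   Context: $\mathscr{M}_n$ denotes the algebra of $n\times n$ complex matrices; $\le$ is the Löwner order. A linear map is positive if it maps positive semidefinite matrices to positive semidefinite matrices. *)

(* Defs.v *)
(* complex matrices over an arbitrary numClosedFieldType C
   (e.g. algC, or complex R for R : rcfType). *)
From HB Require Import structures.
From mathcomp Require Import all_boot all_order all_algebra.
From mathcomp Require Import sesquilinear spectral.
Set Implicit Arguments.
Unset Strict Implicit.
Unset Printing Implicit Defensive.
Import Order.TTheory GRing.Theory Num.Theory Num.Def.
Local Open Scope ring_scope.

Section Defs.
Variable C : numClosedFieldType.

Definition adjmx m p (A : 'M[C]_(m, p)) : 'M[C]_(p, m) := map_mx Num.conj (A^T).

Definition psdmx n (A : 'M[C]_n) : Prop :=
  A \is hermsymmx /\ forall v : 'rV[C]_n, 0 <= (v *m A *m adjmx v) 0 0.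

Definition lemx n (A B : 'M[C]_n) : Prop := psdmx (B - A).

Definition positive_map n r (Phi : 'M[C]_n -> 'M[C]_r) : Prop :=
  forall A : 'M[C]_n, psdmx A -> psdmx (Phi A).

(* square root via the spectral theorem (functional calculus):
   for Hermitian A = P^{-1} diag(d) P with P unitary,
   sqrt A = P^{-1} diag(sqrt d) P; for A psd this is the unique psd square root. *)
Definition msqrt n (A : 'M[C]_n) : 'M[C]_n :=
  invmx (spectralmx A) *m diag_mx (map_mx sqrtC (spectral_diag A)) *m spectralmx A.

End Defs.

(* Main.v *)
Require Import Defs.
From HB Require Import structures.
From mathcomp Require Import all_boot all_order all_algebra.
From mathcomp Require Import sesquilinear spectral.
From mathcomp Require Import ring.
Import Order.TTheory GRing.Theory Num.Theory.
Local Open Scope ring_scope.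
Set Implicit Arguments.
Unset Strict Implicit.
Unset Printing Implicit Defensive.
Section Aux.
Variable C : numClosedFieldType.

Lemma adjmxK m p (A : 'M[C]_(m,p)) : adjmx (adjmx A) = A.
Proof. by apply/matrixP=> i j; rewrite !mxE conjCK. Qed.
Lemma adjmxM m p q (A : 'M[C]_(m,p)) (B : 'M[C]_(p,q)) :
  adjmx (A *m B) = adjmx B *m adjmx A.
Proof. by rewrite /adjmx trmx_mul map_mxM. Qed.
Lemma adjmxD m p (A B : 'M[C]_(m,p)) : adjmx (A + B) = adjmx A + adjmx B.
Proof. by apply/matrixP=> i j; rewrite !mxE rmorphD. Qed.
Lemma adjmxN m p (A : 'M[C]_(m,p)) : adjmx (- A) = - adjmx A.
Proof. by apply/matrixP=> i j; rewrite !mxE rmorphN. Qed.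
Lemma adjmxB m p (A B : 'M[C]_(m,p)) : adjmx (A - B) = adjmx A - adjmx B.
Proof. by rewrite adjmxD adjmxN. Qed.
Lemma adjmxZ m p a (A : 'M[C]_(m,p)) : adjmx (a *: A) = a^* *: adjmx A.
Proof. by apply/matrixP=> i j; rewrite !mxE rmorphM. Qed.
Lemma adjmx_scalar p a : adjmx (a%:M : 'M[C]_p) = (a^*)%:M.
Proof. by apply/matrixP=> i j; rewrite !mxE rmorphMn eq_sym. Qed.
Lemma adjmx_sum I (s : seq I) (P : pred I) m p (F : I -> 'M[C]_(m,p)) :
  adjmx (\sum_(i <- s | P i) F i) = \sum_(i <- s | P i) adjmx (F i).
Proof.
elim/big_rec2: _ => [|i x y _ <-]; first by apply/matrixP=> i j; rewrite !mxE rmorph0.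
by rewrite adjmxD.
Qed.
Lemma adjmx_delta p q (i : 'I_p) (j : 'I_q) :
  adjmx (delta_mx i j : 'M[C]_(p,q)) = delta_mx j i.
Proof. by apply/matrixP=> a b; rewrite !mxE conjC_nat andbC. Qed.

Lemma hermP n (A : 'M[C]_n) : reflect (adjmx A = A) (A \is hermsymmx).
Proof.
rewrite qualifE expr0 scale1r; apply: (iffP eqP) => H.
  by rewrite [RHS]H.
by rewrite -[LHS]H.
Qed.

Lemma dot_ge0 p (u : 'rV[C]_p) : 0 <= (u *m adjmx u) 0 0.
Proof.
rewrite mxE; apply: sumr_ge0 => j _; rewrite !mxE; exact: mul_conjC_ge0.
Qed.

Lemma psd_herm n (A : 'M[C]_n) : psdmx A -> adjmx A = A.
Proof. by case=> /hermP. Qed.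

Lemma psd_muladj p q (X : 'M[C]_(p,q)) : psdmx (X *m adjmx X).
Proof.
split; first by apply/hermP; rewrite adjmxM adjmxK.
by move=> v; rewrite !mulmxA -mulmxA -adjmxM; apply: dot_ge0.
Qed.

Lemma psd_congr p q (Z : 'M[C]_(p,q)) (F : 'M[C]_q) :
  psdmx F -> psdmx (Z *m F *m adjmx Z).
Proof.
case=> /hermP hF Fv; split.
  by apply/hermP; rewrite !adjmxM adjmxK hF mulmxA.
by move=> v; rewrite !mulmxA -mulmxA -adjmxM; apply: Fv.
Qed.

Lemma psdD n (A B : 'M[C]_n) : psdmx A -> psdmx B -> psdmx (A + B).
Proof.
case=> /hermP hA Av [/hermP hB Bv]; split.
  by apply/hermP; rewrite adjmxD hA hB.
by move=> v; rewrite mulmxDr mulmxDl mxE addr_ge0.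
Qed.

Lemma psd0 n : psdmx (0 : 'M[C]_n).
Proof.
split; first by apply/hermP; apply/matrixP=> i j; rewrite !mxE rmorph0.
by move=> v; rewrite mulmx0 mul0mx mxE.
Qed.

Lemma psd_sum I (s : seq I) (P : pred I) n (F : I -> 'M[C]_n) :
  (forall i, P i -> psdmx (F i)) -> psdmx (\sum_(i <- s | P i) F i).
Proof.
move=> H; elim/big_rec: _ => [|i x Pi Hx]; first exact: psd0.
exact: psdD (H i Pi) Hx.
Qed.

Lemma psdZ n a (A : 'M[C]_n) : 0 <= a -> psdmx A -> psdmx (a *: A).
Proof.
move=> a0 [/hermP hA Av]; split.
  by apply/hermP; rewrite adjmxZ hA conj_Creal ?ger0_real.
by move=> v; rewrite -scalemxAr -scalemxAl mxE; apply: mulr_ge0.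
Qed.

Lemma psd1 n : psdmx (1%:M : 'M[C]_n).
Proof. by have := psd_muladj (1%:M : 'M[C]_n); rewrite adjmx_scalar conjC1 mulmx1. Qed.

Lemma psd_scalar n a : 0 <= a -> psdmx (a%:M : 'M[C]_n).
Proof. by move=> a0; rewrite -scalemx1; exact: psdZ (psd1 n). Qed.

End Aux.

Section Spec.
Variable C : numClosedFieldType.

Lemma spec_u1 n (H : 'M[C]_n) : spectralmx H *m adjmx (spectralmx H) = 1%:M.
Proof. exact/unitarymxP/spectral_unitarymx. Qed.

Lemma spec_inv n (H : 'M[C]_n) : invmx (spectralmx H) = adjmx (spectralmx H).
Proof. by rewrite invmx_unitary ?spectral_unitarymx. Qed.

Lemma spec_u2 n (H : 'M[C]_n) : adjmx (spectralmx H) *m spectralmx H = 1%:M.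
Proof. by rewrite -spec_inv mulVmx ?spectral_unit. Qed.

Lemma spec_decomp n (H : 'M[C]_n) : H \is hermsymmx ->
  H = adjmx (spectralmx H) *m diag_mx (spectral_diag H) *m spectralmx H.
Proof.
move=> hH; have /orthomx_spectralP E := hermitian_normalmx hH.
by rewrite {1}E spec_inv.
Qed.

Lemma spec_real n (H : 'M[C]_n) j : H \is hermsymmx ->
  spectral_diag H 0 j \is Num.real.
Proof. by move=> /hermitian_spectral_diag_real /mxOverP. Qed.

Lemma row_diag n (e : 'rV[C]_n) j :
  (delta_mx 0 j : 'rV[C]_n) *m diag_mx e = e 0 j *: delta_mx 0 j.
Proof. by rewrite -rowE row_diag_mx. Qed.

Lemma form_unit n (U : 'M[C]_n) (e : 'rV[C]_n) j : U *m adjmx U = 1%:M ->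
  (((delta_mx 0 j : 'rV[C]_n) *m U) *m (adjmx U *m diag_mx e *m U)
     *m adjmx ((delta_mx 0 j : 'rV[C]_n) *m U)) 0 0 = e 0 j.
Proof.
move=> hU; rewrite adjmxM adjmx_delta !mulmxA -(mulmxA _ U (adjmx U)) hU mulmx1.
rewrite -(mulmxA _ U (adjmx U)) hU mulmx1 row_diag -scalemxAl mul_delta_mx.
by rewrite !mxE !eqxx mulr1.
Qed.

Lemma psd_diag_ge0 n (U : 'M[C]_n) (e : 'rV[C]_n) j : U *m adjmx U = 1%:M ->
  psdmx (adjmx U *m diag_mx e *m U) -> 0 <= e 0 j.
Proof. by move=> hU [_ /(_ ((delta_mx 0 j : 'rV[C]_n) *m U))]; rewrite form_unit. Qed.

Lemma ge0_psd_diag n p (U : 'M[C]_(n,p)) (e : 'rV[C]_n) : (forall j, 0 <= e 0 j) ->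
  psdmx (adjmx U *m diag_mx e *m U).
Proof.
move=> e0; set S := diag_mx (map_mx sqrtC e).
have -> : diag_mx e = S *m adjmx S.
  rewrite /S /adjmx tr_diag_mx map_diag_mx mulmx_diag; congr diag_mx.
  apply/rowP => j; rewrite !mxE.
  rewrite -[RHS]/(sqrtC (e 0 j) * (sqrtC (e 0 j))^*).
  rewrite conj_Creal ?ger0_real ?sqrtC_ge0 // -expr2 sqrtCK.
  by [].
by have := psd_muladj (adjmx U *m S); rewrite adjmxM adjmxK !mulmxA.
Qed.

Lemma mul_spec n (U : 'M[C]_n) (a b : 'rV[C]_n) : U *m adjmx U = 1%:M ->
  (adjmx U *m diag_mx a *m U) *m (adjmx U *m diag_mx b *m U) =
  adjmx U *m diag_mx (\row_j (a 0 j * b 0 j)) *m U.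
Proof.
move=> hU; rewrite !mulmxA -(mulmxA _ U (adjmx U)) hU mulmx1.
by rewrite -(mulmxA _ (diag_mx a)) mulmx_diag.
Qed.

Lemma sub_spec n (U : 'M[C]_n) (a b : 'rV[C]_n) :
  adjmx U *m diag_mx a *m U - adjmx U *m diag_mx b *m U =
  adjmx U *m diag_mx (a - b) *m U.
Proof.
rewrite -mulmxBl -mulmxBr; congr (_ *m _ *m _).
by apply/matrixP=> i k; rewrite !mxE mulrnBl.
Qed.

Lemma scalar_spec n (U : 'M[C]_n) c : adjmx U *m U = 1%:M ->
  c%:M = adjmx U *m diag_mx (const_mx c) *m U.
Proof. by move=> hU; rewrite diag_const_mx mul_mx_scalar -scalemxAl hU scalemx1. Qed.

Lemma msqrtP n (H : 'M[C]_n) : psdmx H ->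
  psdmx (msqrt H) /\ msqrt H *m msqrt H = H.
Proof.
move=> pH; have hH : H \is hermsymmx by case: pH.
have E := spec_decomp hH.
have d0 j : 0 <= spectral_diag H 0 j.
  by apply: (@psd_diag_ge0 n (spectralmx H) _ j (spec_u1 H)); rewrite -E.
rewrite /msqrt spec_inv; split.
  by apply: ge0_psd_diag => j; rewrite mxE sqrtC_ge0.
rewrite (mul_spec _ _ (spec_u1 H)) [RHS]E; congr (_ *m diag_mx _ *m _).
by apply/rowP=> j; rewrite !mxE -expr2 sqrtCK.
Qed.

Lemma eigen_row n (H : 'M[C]_n) j : H \is hermsymmx ->
  ((delta_mx 0 j : 'rV[C]_n) *m spectralmx H) *m H
     = spectral_diag H 0 j *: ((delta_mx 0 j : 'rV[C]_n) *m spectralmx H) /\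
  H *m adjmx ((delta_mx 0 j : 'rV[C]_n) *m spectralmx H)
     = spectral_diag H 0 j *: adjmx ((delta_mx 0 j : 'rV[C]_n) *m spectralmx H).
Proof.
move=> hH.
have e1 : ((delta_mx 0 j : 'rV[C]_n) *m spectralmx H) *m H
     = spectral_diag H 0 j *: ((delta_mx 0 j : 'rV[C]_n) *m spectralmx H).
  rewrite {2}(spec_decomp hH) !mulmxA -(mulmxA _ _ (adjmx _)) spec_u1 mulmx1.
  by rewrite row_diag scalemxAl.
split=> //; have := congr1 (@adjmx C _ _) e1.
by rewrite adjmxM adjmxZ conj_Creal ?spec_real // (hermP _ hH).
Qed.

End Spec.

Section Sq.
Variable C : numClosedFieldType.

Lemma sq_le n (X Y : 'M[C]_n) : psdmx X -> psdmx Y ->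
  psdmx (Y *m Y - X *m X) -> psdmx (Y - X).
Proof.
move=> pX pY pD.
have hH : Y - X \is hermsymmx.
  by apply/hermP; rewrite adjmxB (psd_herm pX) (psd_herm pY).
have E := spec_decomp hH.
rewrite E; apply: ge0_psd_diag => j.
have [e1 e2] := eigen_row j hH.
move: e1 e2.
set w := ((delta_mx 0 j : 'rV[C]_n) *m spectralmx (Y - X)).
set d := spectral_diag (Y - X) 0 j => e1 e2.
have dE : d = (w *m (Y - X) *m adjmx w) 0 0.
  by have := form_unit (spectral_diag (Y - X)) j (spec_u1 (Y - X)); rewrite -E.
set a := (w *m Y *m adjmx w) 0 0.
set b := (w *m X *m adjmx w) 0 0.
have a0 : 0 <= a by case: pY => _; apply.
have b0 : 0 <= b by case: pX => _; apply.
have mxB' (U V : 'M[C]_1) : (U - V) 0 0 = U 0 0 - V 0 0 by rewrite !mxE.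
have mxD' (U V : 'M[C]_1) : (U + V) 0 0 = U 0 0 + V 0 0 by rewrite !mxE.
have mxZ' c (U : 'M[C]_1) : (c *: U) 0 0 = c * U 0 0 by rewrite !mxE.
have dab : d = a - b by rewrite dE mulmxBr mulmxBl mxB'.
have key : (w *m (Y *m Y - X *m X) *m adjmx w) 0 0 = d * (a + b).
  have -> : Y *m Y - X *m X = Y *m (Y - X) + (Y - X) *m X.
    by rewrite mulmxBr mulmxBl addrA subrK.
  rewrite mulmxDr mulmxDl mxD' mulrDr; congr (_ + _).
    by rewrite -!mulmxA e2 -!scalemxAr mxZ' !mulmxA.
  by rewrite !mulmxA e1 -!scalemxAl mxZ'.
have ge : 0 <= d * (a + b) by rewrite -key; case: pD => _; apply.
have [ab0|ab0] := eqVneq (a + b) 0.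
  move/eqP: ab0; rewrite paddr_eq0 // => /andP[/eqP a00 /eqP b00].
  by rewrite dab a00 b00 subrr.
by move: ge; rewrite pmulr_lge0 // lt_def ab0 addr_ge0.
Qed.

Lemma interval_psd n (H : 'M[C]_n) (m M : C) : H \is hermsymmx ->
  lemx m%:M H -> lemx H M%:M -> psdmx ((M%:M - H) *m (H - m%:M)).
Proof.
move=> hH l1 l2; have E := spec_decomp hH.
have u1 := spec_u1 H; have u2 := spec_u2 H.
move: E u1 u2; set P := spectralmx H; set d := spectral_diag H => E u1 u2.
have e1 : H - m%:M = adjmx P *m diag_mx (d - const_mx m) *m P.
  by rewrite {1}E (scalar_spec m u2) sub_spec.
have e2 : M%:M - H = adjmx P *m diag_mx (const_mx M - d) *m P.
  by rewrite {1}E (scalar_spec M u2) sub_spec.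
rewrite e1 e2 mul_spec //; apply: ge0_psd_diag => j; rewrite !mxE.
apply: mulr_ge0.
  by have := @psd_diag_ge0 C n P (const_mx M - d) j u1; rewrite -e2 !mxE; apply.
by have := @psd_diag_ge0 C n P (d - const_mx m) j u1; rewrite -e1 !mxE; apply.
Qed.

End Sq.

Section Kad.
Variable C : numClosedFieldType.

Lemma diag_expand n (U : 'M[C]_n) (e : 'rV[C]_n) :
  adjmx U *m diag_mx e *m U = \sum_j e 0 j *: (adjmx U *m delta_mx j j *m U).
Proof.
rewrite diag_mx_sum_delta mulmx_sumr mulmx_suml; apply: eq_bigr => j _.
by rewrite -scalemxAr -scalemxAl.
Qed.

Lemma proj_psd n (U : 'M[C]_n) j : psdmx (adjmx U *m delta_mx j j *m U).
Proof.
have := psd_muladj (adjmx U *m (delta_mx j 0 : 'cV[C]_n)).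
by rewrite adjmxM adjmxK adjmx_delta !mulmxA -(mulmxA _ (delta_mx j 0)) mul_delta_mx.
Qed.

Lemma kadison n r k (X : 'I_k -> 'M[C]_n)
  (Phi : 'I_k -> {linear 'M[C]_n -> 'M[C]_r}) :
  (forall i, X i \is hermsymmx) -> (forall i, positive_map (Phi i)) ->
  \sum_(i < k) Phi i 1%:M = 1%:M ->
  adjmx (\sum_(i < k) Phi i (X i)) = \sum_(i < k) Phi i (X i) ->
  psdmx (\sum_(i < k) Phi i (X i *m X i) -
     (\sum_(i < k) Phi i (X i)) *m (\sum_(i < k) Phi i (X i))).
Proof.
move=> hX pPhi sum1 hY.
set Y := \sum_(i < k) Phi i (X i) in hY *.
pose P i := spectralmx (X i).
pose dd (p : 'I_k * 'I_n) := spectral_diag (X p.1) 0 p.2.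
pose FF (p : 'I_k * 'I_n) :=
  Phi p.1 (adjmx (P p.1) *m delta_mx p.2 p.2 *m P p.1).
have E i : X i = adjmx (P i) *m diag_mx (spectral_diag (X i)) *m P i.
  exact: spec_decomp.
have sY : Y = \sum_p dd p *: FF p.
  rewrite /Y -(pair_bigA _ (fun i j => dd (i, j) *: FF (i, j))).
  apply: eq_bigr => i _; rewrite {1}E diag_expand linear_sum.
  by apply: eq_bigr => j _; rewrite linearZ.
have s1 : 1%:M = \sum_p FF p.
  rewrite -sum1 -(pair_bigA _ (fun i j => FF (i, j))).
  apply: eq_bigr => i _.
  rewrite (scalar_spec 1 (spec_u2 (X i))) diag_expand linear_sum.
  by apply: eq_bigr => j _; rewrite mxE scale1r.
have sX2 : \sum_(i < k) Phi i (X i *m X i) = \sum_p (dd p * dd p) *: FF p.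
  rewrite -(pair_bigA _ (fun i j => (dd (i, j) * dd (i, j)) *: FF (i, j))).
  apply: eq_bigr => i _.
  have -> : X i *m X i = (adjmx (P i) *m diag_mx (spectral_diag (X i)) *m P i)
     *m (adjmx (P i) *m diag_mx (spectral_diag (X i)) *m P i) by rewrite -E.
  rewrite mul_spec ?spec_u1 // diag_expand linear_sum.
  by apply: eq_bigr => j _; rewrite linearZ mxE.
have pF p : psdmx (FF p) by apply: pPhi; apply: proj_psd.
have real p : (dd p)^* = dd p by rewrite conj_Creal // spec_real.
have T p : ((dd p)%:M - Y) *m FF p *m adjmx ((dd p)%:M - Y) =
   (dd p * dd p) *: FF p - dd p *: (Y *m FF p) - (dd p *: (FF p *m Y) - Y *m FF p *m Y).
  rewrite adjmxB adjmx_scalar real hY.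
  rewrite mulmxBl mul_scalar_mx mulmxBr mul_mx_scalar mulmxBl -scalemxAl.
  by rewrite scalerBr scalerA.
have : psdmx (\sum_p ((dd p)%:M - Y) *m FF p *m adjmx ((dd p)%:M - Y)).
  by apply: psd_sum => p _; apply: psd_congr.
rewrite (eq_bigr _ (fun p _ => T p)) !sumrB -sX2.
clearbody Y.
have h1 : \sum_p dd p *: (Y *m FF p) = Y *m Y.
  transitivity (Y *m \sum_p dd p *: FF p); last by rewrite -sY.
  by rewrite mulmx_sumr; apply: eq_bigr => p _; rewrite scalemxAr.
have h2 : \sum_p dd p *: (FF p *m Y) = Y *m Y.
  transitivity ((\sum_p dd p *: FF p) *m Y); last by rewrite -sY.
  by rewrite mulmx_suml; apply: eq_bigr => p _; rewrite scalemxAl.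
have h3 : \sum_p Y *m FF p *m Y = Y *m Y.
  transitivity (Y *m (\sum_p FF p) *m Y); last by rewrite -s1 mulmx1.
  by rewrite mulmx_sumr mulmx_suml.
by rewrite h1 h2 h3 subrr subr0.
Qed.

End Kad.

Section Fin.
Variable C : numClosedFieldType.

Lemma sqexp n (T : 'M[C]_n) x y :
  (x *: T + y%:M) *m (x *: T + y%:M) =
  (x * x) *: (T *m T) + (2 * x * y) *: T + (y * y)%:M.
Proof.
rewrite mulmxDl !mulmxDr mul_mx_scalar mul_scalar_mx -scalemxAl -scalemxAr.
rewrite scalerA -scalar_mxM.
move: (T *m T) => TT; apply/matrixP => i j; rewrite !mxE.
case: eqP => _; rewrite ?mulr1n ?mulr0n; ring.
Qed.

Lemma kant n k (X : 'I_k -> 'M[C]_n) r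
  (Phi : 'I_k -> {linear 'M[C]_n -> 'M[C]_r}) (m M : C) :
  (forall i, X i \is hermsymmx) ->
  (forall i, lemx m%:M (X i) /\ lemx (X i) M%:M) ->
  (forall i, positive_map (Phi i)) ->
  \sum_(i < k) Phi i 1%:M = 1%:M ->
  psdmx ((M + m) *: \sum_(i < k) Phi i (X i) - (M * m)%:M
         - \sum_(i < k) Phi i (X i *m X i)).
Proof.
move=> hX bX pPhi sum1.
have : psdmx (\sum_(i < k) Phi i ((M%:M - X i) *m (X i - m%:M))).
  apply: psd_sum => i _; apply: pPhi; apply: interval_psd => //.
    by case: (bX i).
  by case: (bX i).
have e i : (M%:M - X i) *m (X i - m%:M) =
    (M + m) *: X i - (M * m) *: 1%:M - X i *m X i.
  rewrite mulmxBl !mulmxBr !mul_mx_scalar !mul_scalar_mx.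
  move: (X i *m X i) => XX; apply/matrixP => a b; rewrite !mxE.
  case: eqP => _; rewrite ?mulr1n ?mulr0n; ring.
have e' i : Phi i ((M%:M - X i) *m (X i - m%:M)) =
   (M + m) *: Phi i (X i) - (M * m) *: Phi i 1%:M - Phi i (X i *m X i).
  by rewrite e !linearB !linearZ.
rewrite (eq_bigr _ (fun i _ => e' i)) !sumrB.
by rewrite -!scaler_sumr sum1 scalemx1.
Qed.

End Fin.

Section Fin2.
Variable C : numClosedFieldType.

Lemma kant_sqrt r (T S : 'M[C]_r) (m M : C) : 0 < m -> m < M ->
  psdmx T -> psdmx S ->
  psdmx ((M + m) *: T - (M * m)%:M - S *m S) ->
  psdmx (((M + m) / (2 * sqrtC (M * m))) *: T - S) /\
  psdmx (T + ((M - m) ^+ 2 / (2 * (M + m)) / 2)%:M - S).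
Proof.
move=> m0 mM pT pS pQ.
have M0 : 0 < M by apply: lt_trans mM.
have mr : m \is Num.real by apply: gtr0_real.
have Mr : M \is Num.real by apply: gtr0_real.
set s := sqrtC (M * m).
have s0 : 0 < s by rewrite sqrtC_gt0 mulr_gt0.
have sn0 : s != 0 by rewrite gt_eqF.
have hs : M * m = s ^+ 2 by rewrite sqrtCK.
have Mm0 : 0 < M + m by rewrite addr_gt0.
have Mmn0 : M + m != 0 by rewrite gt_eqF.
have two0 : (2 : C) != 0 by rewrite pnatr_eq0.
have hT := psd_herm pT.
split.
  set c := (M + m) / (2 * s).
  have c0 : 0 <= c by rewrite divr_ge0 ?ltW // mulr_gt0 // ltr0n.
  apply: sq_le => //; first exact: psdZ.
  have R := psd_muladj (c *: T + (- s)%:M).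
  have cr : c^* = c by rewrite conj_Creal // ger0_real.
  have sr : (- s)^* = - s by rewrite conj_Creal // realN ger0_real // ltW.
  rewrite adjmxD adjmxZ adjmx_scalar hT cr sr in R.
  have -> : c *: T *m (c *: T) - S *m S =
      (c *: T + (- s)%:M) *m (c *: T + (- s)%:M)
      + ((M + m) *: T - (M * m)%:M - S *m S).
    rewrite sqexp -scalemxAl -scalemxAr scalerA hs.
    move: (T *m T) (S *m S) => TT SS; apply/matrixP => i j; rewrite !mxE.
    by rewrite /c; case: eqP => _; rewrite ?mulr1n ?mulr0n; field.
  exact: psdD.
set e := (M - m) ^+ 2 / (2 * (M + m)) / 2.
have e0 : 0 <= e.
  rewrite divr_ge0 ?ler0n // divr_ge0 ?exprn_ge0 ?subr_ge0 ?ltW //.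
  by rewrite mulr_gt0 ?ltr0n.
set a := (M + m) / 2 - e.
have ar : a \is Num.real.
  by rewrite rpredB ?ger0_real // divr_ge0 ?ler0n ?ltW.
apply: (@sq_le C r S (T + e%:M)) => //; first exact: psdD pT (psd_scalar _ e0).
have R := psd_muladj (1 *: T + (- a)%:M).
have cr : (1 : C)^* = 1 by rewrite conjC1.
have sr : (- a)^* = - a by rewrite conj_Creal // realN.
rewrite adjmxD adjmxZ adjmx_scalar hT cr sr in R.
have -> : (T + e%:M) *m (T + e%:M) - S *m S =
    (1 *: T + (- a)%:M) *m (1 *: T + (- a)%:M)
    + ((M + m) *: T - (M * m)%:M - S *m S).
  rewrite -[T in LHS]scale1r sqexp sqexp.
  move: (T *m T) (S *m S) => TT SS; apply/matrixP => i j; rewrite !mxE.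
  by rewrite /a /e; case: eqP => _; rewrite ?mulr1n ?mulr0n; field; rewrite ?mulf_neq0.
exact: psdD.
Qed.

End Fin2.

Unset Implicit Arguments.
Set Strict Implicit.
Theorem mainTheorem8 (C : numClosedFieldType) (n r k : nat)
  (A B : 'I_k -> 'M[C]_n) (m M : C)
  (Phi : 'I_k -> {linear 'M[C]_n -> 'M[C]_r}) :
  0 < m -> m < M ->
  (forall i, A i \is hermsymmx) -> (forall i, B i \is hermsymmx) ->
  (forall i, lemx (m%:M) (A i) /\ lemx (A i) (M%:M)) ->
  (forall i, lemx (m%:M) (B i) /\ lemx (B i) (M%:M)) ->
  (forall i, positive_map (Phi i)) ->
  \sum_(i < k) Phi i 1%:M = 1%:M ->
  let SA := msqrt (\sum_(i < k) Phi i (A i *m A i)) in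
  let SB := msqrt (\sum_(i < k) Phi i (B i *m B i)) in
  let SAB := msqrt (\sum_(i < k) Phi i ((A i + B i) *m (A i + B i))) in
  lemx (SA + SB) (((M + m) / (2 * sqrtC (M * m))) *: SAB) /\
  lemx (SA + SB) (((M - m) ^+ 2 / (2 * (M + m))) *: 1%:M + SAB).
Proof.
move=> m0 mM hA hB bA bB pPhi sum1 SA SB SAB.
have M0 : 0 < M by apply: lt_trans mM.
have psdX (X : 'I_k -> 'M[C]_n) :
    (forall i, lemx m%:M (X i) /\ lemx (X i) M%:M) -> forall i, psdmx (X i).
  move=> bX i; have -> : X i = (X i - m%:M) + m%:M by rewrite subrK.
  by apply: psdD; [case: (bX i) | apply: psd_scalar; apply: ltW].
have pA := psdX A bA; have pB := psdX B bB.
have psdT (X : 'I_k -> 'M[C]_n) :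
    (forall i, psdmx (X i)) -> psdmx (\sum_(i < k) Phi i (X i)).
  by move=> pX; apply: psd_sum => i _; apply: pPhi.
have psdP (X : 'I_k -> 'M[C]_n) : (forall i, X i \is hermsymmx) ->
    psdmx (\sum_(i < k) Phi i (X i *m X i)).
  move=> hX; apply: psdT => i; have /hermP e := hX i.
  by have := psd_muladj (X i); rewrite e.
have hAB i : A i + B i \is hermsymmx.
  have /hermP e1 := hA i; have /hermP e2 := hB i.
  by apply/hermP; rewrite adjmxD e1 e2.
have [pSA eSA] : psdmx SA /\ SA *m SA = \sum_(i < k) Phi i (A i *m A i).
  exact: msqrtP (psdP A hA).
have [pSB eSB] : psdmx SB /\ SB *m SB = \sum_(i < k) Phi i (B i *m B i).
  exact: msqrtP (psdP B hB).
have [pSAB eSAB] : psdmx SAB /\ SAB *m SAB =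
    \sum_(i < k) Phi i ((A i + B i) *m (A i + B i)).
  exact: msqrtP (psdP (fun i => A i + B i) hAB).
set TA := \sum_(i < k) Phi i (A i).
set TB := \sum_(i < k) Phi i (B i).
have pTA : psdmx TA by apply: psdT.
have pTB : psdmx TB by apply: psdT.
have kA := kant hA bA pPhi sum1; rewrite -eSA in kA.
have kB := kant hB bB pPhi sum1; rewrite -eSB in kB.
have [kA1 kA2] := kant_sqrt m0 mM pTA pSA kA.
have [kB1 kB2] := kant_sqrt m0 mM pTB pSB kB.
have sTAB : \sum_(i < k) Phi i (A i + B i) = TA + TB.
  by rewrite -big_split; apply: eq_bigr => i _; rewrite linearD.
have kad := kadison hAB pPhi sum1.
rewrite sTAB -eSAB in kad.
have kAB := sq_le (psdD pTA pTB) pSAB (kad (psd_herm (psdD pTA pTB))).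
clearbody SA SB SAB TA TB.
set c := (M + m) / (2 * sqrtC (M * m)).
have c0 : 0 <= c.
  rewrite divr_ge0 ?addr_ge0 ?ltW //.
  by rewrite mulr_gt0 ?ltr0n // sqrtC_gt0 mulr_gt0.
split; rewrite /lemx.
  have -> : c *: SAB - (SA + SB) =
      c *: (SAB - (TA + TB)) + (c *: TA - SA) + (c *: TB - SB).
    by apply/matrixP => i j; rewrite !mxE; ring.
  by apply: psdD; [apply: psdD; [apply: psdZ|] |].
set e := (M - m) ^+ 2 / (2 * (M + m)) / 2 in kA2 kB2 *.
have -> : (M - m) ^+ 2 / (2 * (M + m)) *: 1%:M + SAB - (SA + SB) =
    (SAB - (TA + TB)) + (TA + e%:M - SA) + (TB + e%:M - SB).
  apply/matrixP => i j; rewrite !mxE /e.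
  have two0 : (2 : C) != 0 by rewrite pnatr_eq0.
  have Mm0 : M + m != 0 by rewrite gt_eqF // addr_gt0.
  by case: eqP => _; rewrite ?mulr1n ?mulr0n; field.
by apply: psdD; [apply: psdD|].
Qed.
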